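(* Let $\Theta\subset\mathbb{R}^p$, let $\mathcal{K}\subset\Theta$ be compact, let $P$ be a probability measure on a measurable space $\Omega_T$, and for each $\theta\in\Theta$ let $(h^\theta_n)_{n\ge1}$ be measurable functions $\Omega_T\to\mathbb{R}$. Assume: (i) for every $\theta\in\Theta$, $h^\theta_n$ converges $P$-a.s. to a finite real number $h^\theta$; (ii) $\theta\mapsto h^\theta$ has a unique minimizer $\theta^*$ over $\Theta$, and $\theta^*\in\mathcal{K}$; (iii) for $P$-a.e. $\omega$ and all $n$ large enough, $\theta\mapsto h^\theta_n(\omega)$ attains its infimum over $\mathcal{K}$ at at least one point $\hat\theta_n(\omega)$; (iv) $\theta\mapsto h^\theta$ is lower semicontinuous on $\Theta$; (v) there is $g_0:\mathbb{R}_+\to\mathbb{R}_+$ with $\lim_{x\to0}g_0(x)=0$ such that for every $\varepsilon>0$ and $\theta\in\mathcal{K}$ there are a finite set $\mathcal{N}(\theta)\subset B(\theta,g_0(\varepsilon))\cap\Theta$ and $r(\theta)>0$ with $P\Big(\limsup_{n\to\infty}\big(\min_{\theta'\in\mathcal{N}(\theta)}h^{\theta'}_n-\inf_{\theta'\in B(\theta,r(\theta))\cap\mathcal{K}}h^{\theta'}_n\big)\ge\varepsilon\Big)=0.$ Then $\hat\theta_n=\mathrm{argmin}_{\theta\in\mathcal{K}}h^\theta_n$ converges $P$-almost surely to $\theta^*$ as $n\to\infty$.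
   Context: $B(\theta,r)$ denotes the open Euclidean ball of center $\theta$ and radius $r$ in $\mathbb{R}^p$. *)

(* Defs.v *)
From HB Require Import structures.
From mathcomp Require Import all_boot all_order all_algebra.
From mathcomp Require Import all_classical all_reals all_analysis.
Set Implicit Arguments. Unset Strict Implicit. Unset Printing Implicit Defensive.
Import Order.TTheory GRing.Theory Num.Theory.
Import numFieldNormedType.Exports.
Local Open Scope classical_set_scope.
Local Open Scope ring_scope.

Definition enorm (R : realType) (p : nat) (v : 'rV[R]_p) : R :=
  Num.sqrt (\sum_(i < p) (v ord0 i) ^+ 2).

Definition eball (R : realType) (p : nat) (theta : 'rV[R]_p) (r : R) : set 'rV[R]_p :=
  [set x | enorm (x - theta) < r].

(* lower semicontinuity of f on A (for the topology induced on A) *)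
Definition lsc_on (R : realType) (p : nat) (A : set 'rV[R]_p) (f : 'rV[R]_p -> R) :=
  forall x, A x -> forall e : R, 0 < e ->
    \forall y \near x, A y -> f x - e < f y.

(* Main.v *)
Require Import Defs.
From HB Require Import structures.
From mathcomp Require Import all_boot all_order all_algebra.
From mathcomp Require Import all_classical all_reals all_analysis.
From mathcomp Require Import lra finmap.
Set Implicit Arguments. Unset Strict Implicit.
Import Order.TTheory GRing.Theory Num.Theory.
Import numFieldNormedType.Exports.
Local Open Scope classical_set_scope.
Local Open Scope ring_scope.

Lemma entry_le_norm (R : realType) (p : nat) (v : 'rV[R]_p) i :
  `|v ord0 i| <= `|v|.
Proof.
have /mapP[j Hj ->] : `|v ord0 i| \in [seq `|v x.1 x.2| | x : 'I_1 * 'I_p].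
  by apply/mapP; exists (ord0, i) => //=; rewrite mem_enum.
by rewrite (_ : `|v| = mx_norm v) // mx_normrE; apply/bigmax_geP; right => /=; exists j.
Qed.

Lemma entry_le_enorm (R : realType) (p : nat) (v : 'rV[R]_p) i :
  `|v ord0 i| <= enorm v.
Proof.
rewrite /enorm -sqrtr_sqr; apply: ler_wsqrtr.
by rewrite (bigD1 i) //= lerDl sumr_ge0 // => j _; exact: sqr_ge0.
Qed.

Lemma norm_le_enorm (R : realType) (p : nat) (v : 'rV[R]_p) :
  `|v| <= enorm v.
Proof.
rewrite (_ : `|v| = mx_norm v) // mx_normrE; apply/bigmax_leP; split.
  by rewrite /enorm sqrtr_ge0.
by move=> [a b] _ /=; rewrite (ord1 a); exact: entry_le_enorm.
Qed.

Lemma enorm_le_norm (R : realType) (p : nat) (v : 'rV[R]_p) :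
  enorm v <= p%:R * `|v|.
Proof.
have h0 : 0 <= p%:R * `|v| by rewrite mulr_ge0.
rewrite /enorm -(ger0_norm h0) -sqrtr_sqr; apply: ler_wsqrtr.
apply: (@le_trans _ _ (\sum_(i < p) `|v|^+2)).
  apply: ler_sum => i _; rewrite -real_normK ?num_real //.
  by rewrite lerXn2r ?nnegrE // entry_le_norm.
rewrite sumr_const card_ord exprMn -[X in X <= _]mulr_natl.
apply: ler_wpM2r; first exact: sqr_ge0.
by rewrite -natrX ler_nat; case: (p) => // n; rewrite expnS leq_pmulr.
Qed.

Lemma near_fset (X : Type) (F : set_system X) (FF : Filter F)
  (I : choiceType) (D : {fset I}) (Q : I -> X -> Prop) :
  (forall i, i \in D -> \forall x \near F, Q i x) ->
  \forall x \near F, forall i, i \in D -> Q i x.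
Proof.
move=> H; apply: filterS (filter_bigI (f := fun i => [set x | Q i x]) FF H).
by move=> x Hx i iD; exact: (Hx i iD).
Qed.

Lemma limn_esup_lt (R : realType) (u : nat -> \bar R) (e : \bar R) :
  (limn_esup u < e)%E -> \forall n \near \oo, (u n < e)%E.
Proof.
rewrite /limn_esup limf_esupE => /ereal_inf_lt [_ [V FV <-]] He.
apply: filterS FV => n Vn; apply: le_lt_trans He.
by apply: ereal_sup_ubound; exists n.
Qed.

Lemma ballE (R : realType) (p : nat) (x y : 'rV[R]_p) (e : R) :
  ball x e y <-> `|x - y| < e.
Proof. by rewrite -ball_normE. Qed.

Section Main.
Variables (R : realType) (p : nat) (d : measure_display)
  (T : measurableType d) (P : probability T R)
  (Theta K : set 'rV[R]_p)
  (h : 'rV[R]_p -> nat -> T -> R) (hlim : 'rV[R]_p -> R)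
  (theta_star : 'rV[R]_p) (theta_hat : nat -> T -> 'rV[R]_p)
  (g0 : R -> R).
Hypothesis HKT : K `<=` Theta.
Hypothesis Hcpt : compact K.
Hypothesis Hi : forall theta, Theta theta ->
     {ae P, forall w, h theta n w @[n --> \oo] --> hlim theta}.
Hypothesis Hts : Theta theta_star.
Hypothesis Hmin : forall theta, Theta theta -> hlim theta_star <= hlim theta.
Hypothesis Huniq : forall theta, Theta theta ->
     (forall theta', Theta theta' -> hlim theta <= hlim theta') ->
     theta = theta_star.
Hypothesis HKts : K theta_star.
Hypothesis Hiii : {ae P, forall w, \forall n \near \oo,
     K (theta_hat n w) /\
     (forall theta, K theta -> h (theta_hat n w) n w <= h theta n w)}.
Hypothesis Hlsc : lsc_on Theta hlim.
Hypothesis Hg0 : g0 x @[x --> 0^'+] --> 0.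
Hypothesis Hv : forall eps : R, 0 < eps -> forall theta, K theta ->
     exists (N : set 'rV[R]_p) (r : R),
       [/\ finite_set N, N `<=` eball theta (g0 eps) `&` Theta, 0 < r &
       P.-negligible
         [set w | (eps%:E <=
            limn_esup (fun n =>
              ereal_inf [set (h theta' n w)%:E | theta' in N] -
              ereal_inf [set (h theta' n w)%:E | theta' in eball theta r `&` K]))%E]].

Lemma local_step theta : K theta -> theta <> theta_star ->
  exists2 rho : R, 0 < rho &
    {ae P, forall w, \forall n \near \oo, ~ ball theta rho (theta_hat n w)}.
Proof.
move=> Kt neq; have Tt := HKT Kt.
pose gap := hlim theta - hlim theta_star.
have gap0 : 0 < gap.
  rewrite subr_gt0 lt_neqAle Hmin // andbT; apply/eqP => E; apply: neq.
  by apply: Huniq => // t' Tt'; rewrite -E; apply: Hmin.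
have [rho0 rho00 Hrho0] : nbhs_ball theta
    [set y | Theta y -> hlim theta - gap / 2 < hlim y].
  by apply/nbhs_ballP; apply: Hlsc => //; rewrite divr_gt0.
have [eps [eps0 [epsgap geps]]] : exists eps, 0 < eps /\ eps < gap / 4 /\ g0 eps < rho0.
  have g4 : 0 < gap / 4 by rewrite divr_gt0.
  have H : \forall x \near 0^'+, 0 < x /\ x < gap / 4 /\ g0 x < rho0.
    near=> x; split; [|split].
    - by near: x; exact: nbhs_right_gt.
    - by near: x; exact: nbhs_right_lt.
    - by near: x; exact: (cvgr_lt _ Hg0 _ rho00).
  by have [x ?] := filter_ex H; exists x.
have [N [r [finN NsubB r0 negl]]] := Hv eps0 Kt.
have [N' EN] := (finite_fsetP.1 finN); subst N.
pose rho := r / (p%:R + 1).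
have rho0' : 0 < rho by rewrite divr_gt0 // ltr_wpDl.
exists rho => //.
have aeN : {ae P, forall w, forall t', t' \in N' ->
     h t' n w @[n --> \oo] --> hlim t'}.
  apply: near_fset => t' t'N; apply: Hi.
  by have [] := NsubB t' t'N.
have aeV : {ae P, forall w, ~ (eps%:E <=
            limn_esup (fun n =>
              ereal_inf [set (h theta' n w)%:E | theta' in [set` N']] -
              ereal_inf [set (h theta' n w)%:E | theta' in eball theta r `&` K]))%E}.
  apply: negligibleS negl => w /=; exact: contrapT.
have aets := Hi Hts.
apply: filterS (filterI aeN (filterI aeV (filterI aets Hiii))).
move=> w [HN [HV [Hts' H3]]].
have E1 : \forall n \near \oo, forall t', t' \in N' ->
    hlim theta_star + gap / 2 < h t' n w.
  apply: near_fset => t' t'N; apply: (cvgr_gt _ (HN t' t'N)).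
  have [Bt' Tt'] := NsubB t' t'N.
  have : ball theta rho0 t'.
    apply/ballE; rewrite -normrN opprB.
    have h1 := norm_le_enorm (t' - theta); have h2 : enorm (t' - theta) < g0 eps := Bt'.
    exact: le_lt_trans h1 (lt_trans h2 geps).
  move=> /Hrho0 /(_ Tt'); rewrite /gap; lra.
move: HV; set u := (X in limn_esup X) => HV.
move/negP: HV; rewrite -ltNge => /limn_esup_lt E2.
have g4' : hlim theta_star < hlim theta_star + gap / 4 by lra.
have E3 : \forall n \near \oo, h theta_star n w < hlim theta_star + gap / 4 := cvgr_lt _ Hts' _ g4'.
near=> n => Bn.
have [Kn mn] : K (theta_hat n w) /\ (forall t, K t -> h (theta_hat n w) n w <= h t n w) by near: n.
have e1 : forall t', t' \in N' -> hlim theta_star + gap / 2 < h t' n w by near: n.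
have e2 : (u n < eps%:E)%E by near: n.
have e3 : h theta_star n w < hlim theta_star + gap / 4 by near: n; exact: E3.
have Beb : eball theta r (theta_hat n w).
  rewrite /eball /=; have h1 := enorm_le_norm (theta_hat n w - theta).
  move/ballE: Bn; rewrite -normrN opprB => Bn.
  have hx0 := normr_ge0 (theta_hat n w - theta).
  have hx : `|theta_hat n w - theta| * (p%:R + 1) < r.
    by rewrite -ltr_pdivlMr // ltr_wpDl.
  have hp : 0 <= (p%:R : R) by [].
  nra.
have infB : (ereal_inf [set (h theta' n w)%:E | theta' in eball theta r `&` K]
   <= (h (theta_hat n w) n w)%:E)%E.
  by apply: ereal_inf_lbound; exists (theta_hat n w).
have infN : ((hlim theta_star + gap / 2)%:E <=
   ereal_inf [set (h theta' n w)%:E | theta' in [set` N']])%E.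
  by apply: le_ereal_inf_tmp => _ [t' t'N <-]; rewrite lee_fin ltW // e1.
have := le_lt_trans (leeB infN infB) e2.
rewrite -EFinB lte_fin => hc.
have := mn _ HKts; lra.
Unshelve. all: by end_near.
Qed.

Lemma delta_step (del : R) : 0 < del ->
  {ae P, forall w, \forall n \near \oo, ball theta_star del (theta_hat n w)}.
Proof.
move=> d0.
pose Kd := K `&` ~` ball theta_star del.
have cKd : compact Kd by apply: compact_closedI Hcpt (open_closedC (ball_open _ _)).
have : forall t, exists rho : R, Kd t -> 0 < rho /\
    {ae P, forall w, \forall n \near \oo, ~ ball t rho (theta_hat n w)}.
  move=> t; have [Kdt | nKdt] := pselect (Kd t); last by exists 1.
  have [Kt nb] := Kdt.
  have neq : t <> theta_star by move=> E; apply: nb; rewrite E; exact: ballxx.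
  by have [rho ? ?] := local_step Kt neq; exists rho.
move=> /choice [rf Hrf].
have : cover_compact Kd by rewrite -compact_cover.
move=> /(_ _ Kd (fun t => ball t (rf t))) [].
- by move=> t _; exact: ball_open.
- move=> t Kdt; exists t => //; apply: ballxx; by have [] := Hrf t Kdt.
move=> D' D'sub cov.
have ae1 : {ae P, forall w, forall t, t \in D' ->
    \forall n \near \oo, ~ ball t (rf t) (theta_hat n w)}.
  apply: near_fset => t tD; have := D'sub _ tD; move=> /set_mem /Hrf [].
  done.
apply: filterS (filterI ae1 Hiii) => w [H1 H2].
have H3 : \forall n \near \oo, forall t, t \in D' -> ~ ball t (rf t) (theta_hat n w) := near_fset _ H1.
near=> n.
have Hn : forall t, t \in D' -> ~ ball t (rf t) (theta_hat n w) by near: n; exact: H3.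
have [Kn _] : K (theta_hat n w) /\
   (forall t, K t -> h (theta_hat n w) n w <= h t n w) by near: n.
apply: contrapT => nb.
have Kdn : Kd (theta_hat n w) by split.
have [t tD bt] := cov _ Kdn.
exact: Hn t tD bt.
Unshelve. all: by end_near.
Qed.

Lemma main_sec : {ae P, forall w, theta_hat n w @[n --> \oo] --> theta_star}.
Proof.
have H : forall k : nat, {ae P, forall w, \forall n \near \oo,
   ball theta_star (k.+1%:R^-1) (theta_hat n w)}.
  by move=> k; apply: delta_step; rewrite invr_gt0.
have := ae_foralln H.
apply: filterS => w Hw; apply/cvg_ballP => e e0.
have [k hk] := filter_ex (near_infty_natSinv_lt (PosNum e0)).
by apply: filterS (Hw k) => n; apply: le_ball; exact: ltW.
Qed.
End Main.

Unset Implicit Arguments.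

Theorem lemma4 (R : realType) (p : nat) (d : measure_display)
  (T : measurableType d) (P : probability T R)
  (Theta K : set 'rV[R]_p)
  (h : 'rV[R]_p -> nat -> T -> R) (hlim : 'rV[R]_p -> R)
  (theta_star : 'rV[R]_p) (theta_hat : nat -> T -> 'rV[R]_p)
  (g0 : R -> R) :
  K `<=` Theta -> compact K ->
  (forall theta, Theta theta -> forall n, measurable_fun setT (h theta n)) ->
  (* (i) *)
  (forall theta, Theta theta ->
     {ae P, forall w, h theta n w @[n --> \oo] --> hlim theta}) ->
  (* (ii) *)
  Theta theta_star ->
  (forall theta, Theta theta -> hlim theta_star <= hlim theta) ->
  (forall theta, Theta theta ->
     (forall theta', Theta theta' -> hlim theta <= hlim theta') ->
     theta = theta_star) ->
  K theta_star ->
  (* (iii) *)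
  {ae P, forall w, \forall n \near \oo,
     K (theta_hat n w) /\
     (forall theta, K theta -> h (theta_hat n w) n w <= h theta n w)} ->
  (* (iv) *)
  lsc_on Theta hlim ->
  (* (v) *)
  (forall x, 0 <= x -> 0 <= g0 x) ->
  g0 x @[x --> 0^'+] --> 0 ->
  (forall eps : R, 0 < eps -> forall theta, K theta ->
     exists (N : set 'rV[R]_p) (r : R),
       [/\ finite_set N, N `<=` eball theta (g0 eps) `&` Theta, 0 < r &
       P.-negligible
         [set w | (eps%:E <=
            limn_esup (fun n =>
              ereal_inf [set (h theta' n w)%:E | theta' in N] -
              ereal_inf [set (h theta' n w)%:E | theta' in eball theta r `&` K]))%E]]) ->
  {ae P, forall w, theta_hat n w @[n --> \oo] --> theta_star}.
Proof.
move=> HKT Hcpt _ Hi Hts Hmin Huniq HKts Hiii Hlsc _ Hg0 Hv.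
exact: (main_sec HKT Hcpt Hi Hts Hmin Huniq HKts Hiii Hlsc Hg0 Hv).
Qed.
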